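(* Let $\gamma > 1$ and let $I$ be a $\gamma$-stable instance of the Euclidean Steiner tree problem with optimal Steiner tree $\mathrm{OPT}$. If $a_1, a_2$ are distinct terminals and $b$ is a Steiner point such that $a_1 b$ and $a_2 b$ are both edges of $\mathrm{OPT}$, then the angle $\angle a_1 b a_2$ is greater than $2\sin^{-1}(\gamma/2)$.
   Context: An instance of the Euclidean Steiner tree problem consists of a finite set $V \subset \mathbb{R}^d$, a set $T \subseteq V$ of terminals, and the complete graph on $V$ with edge weights $w_{uv} = \|u - v\|$. Points of $V \setminus T$ are Steiner points. A Steiner tree is a tree in this complete graph whose vertex set contains all of $T$; its weight is the sum of its edge weights. For $\gamma > 1$, the instance is $\gamma$-stable if it has a minimum-weight Steiner tree $\mathrm{OPT}$ such that for every $w' : V \times V \to \mathbb{R}_{\ge 0}$ with $w_{uv} \le w'_{uv} \le \gamma w_{uv}$ for all $u,v$, every minimum-weight Steiner tree with respect to $w'$ equals $\mathrm{OPT}$ (the $w'$ need not be Euclidean). $\angle a_1 b a_2 \in [0,\pi]$ is the angle at $b$ between the vectors $a_1 - b$ and $a_2 - b$. *)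

(* Defs.v *)
From HB Require Import structures.
From mathcomp Require Import all_boot all_order all_algebra.
From mathcomp Require Import all_classical all_reals all_analysis.
Set Implicit Arguments. Unset Strict Implicit. Unset Printing Implicit Defensive.
Import Order.TTheory GRing.Theory Num.Theory.
Local Open Scope ring_scope.

Section SteinerDefs.
Variables (R : realType) (d : nat) (T : finType).

Definition dotv (x y : 'rV[R]_d) : R := \sum_(i < d) x ord0 i * y ord0 i.
Definition enorm (x : 'rV[R]_d) : R := Num.sqrt (dotv x x).

Definition angle (a1 b a2 : 'rV[R]_d) : R :=
  acos (dotv (a1 - b) (a2 - b) / (enorm (a1 - b) * enorm (a2 - b))).

(* A tree in the complete graph on T: vertex set U, edge set E stored as a
   symmetric set of ordered pairs (each undirected edge {u,v} appears as
   (u,v) and (v,u)); connected on U with |E_undirected| = |U| - 1. *)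
Definition is_tree (U : {set T}) (E : {set T * T}) : Prop :=
  [/\ U != finset.set0,
      forall x y, (x, y) \in E -> [&& x \in U, y \in U & x != y],
      forall x y, (x, y) \in E -> (y, x) \in E,
      {in U &, forall x y, connect (fun a b => (a, b) \in E) x y}
    & #|E| = (#|U| - 1).*2]%N.

Definition steiner_tree (Term : {set T}) (U : {set T}) (E : {set T * T}) : Prop :=
  is_tree U E /\ Term \subset U.

(* weight of a tree: sum over undirected edges = half the sum over ordered pairs *)
Definition tree_weight (w : T -> T -> R) (E : {set T * T}) : R :=
  (\sum_(p in E) w p.1 p.2) / 2.

Definition min_steiner (Term : {set T}) (w : T -> T -> R)
    (U : {set T}) (E : {set T * T}) : Prop :=
  steiner_tree Term U E /\
  forall U' E', steiner_tree Term U' E' -> tree_weight w E <= tree_weight w E'.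

Definition eweight (pos : T -> 'rV[R]_d) (u v : T) : R := enorm (pos u - pos v).

Definition stable_with (pos : T -> 'rV[R]_d) (Term : {set T}) (gamma : R)
    (U : {set T}) (E : {set T * T}) : Prop :=
  min_steiner Term (eweight pos) U E /\
  forall w' : T -> T -> R,
    (forall u v, w' u v = w' v u) ->
    (forall u v, eweight pos u v <= w' u v <= gamma * eweight pos u v) ->
    forall U' E', min_steiner Term w' U' E' -> U' = U /\ E' = E.

Definition stable (pos : T -> 'rV[R]_d) (Term : {set T}) (gamma : R) : Prop :=
  exists U E, stable_with pos Term gamma U E.

End SteinerDefs.

(* Main.v *)
Require Import Defs.
From HB Require Import structures.
From mathcomp Require Import all_boot all_order all_algebra.
From mathcomp Require Import all_classical all_reals all_analysis.
From mathcomp Require Import ring lra zify.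
Import Order.TTheory GRing.Theory Num.Theory.
Local Open Scope ring_scope.

Section Geo.
Variables (R : realType) (d : nat).
Implicit Types x y : 'rV[R]_d.

Lemma dotvC x y : dotv x y = dotv y x.
Proof. by rewrite /dotv; apply: eq_bigr => i _; rewrite mulrC. Qed.

Lemma dotv_ge0 x : 0 <= dotv x x.
Proof. by rewrite /dotv; apply: sumr_ge0 => i _; rewrite -expr2 sqr_ge0. Qed.

Lemma dotv_expand x y (t : R) :
  dotv (x - t *: y) (x - t *: y) = dotv x x - 2 * t * dotv x y + t ^+ 2 * dotv y y.
Proof.
rewrite /dotv !mulr_sumr -sumrB -big_split /=; apply: eq_bigr => i _.
rewrite !mxE; ring.
Qed.

Lemma dotv_eq0 {x} : dotv x x = 0 -> x = 0.
Proof.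
move=> h; apply/matrixP => i j; rewrite mxE (ord1 i).
have /eqP := h; rewrite /dotv psumr_eq0; last by move=> k _; rewrite -expr2 sqr_ge0.
move=> /allP /(_ j (mem_index_enum _)) /=.
by rewrite mulf_eq0 orbb => /eqP.
Qed.

Lemma enorm_gt0 {x} : x != 0 -> 0 < enorm x.
Proof.
move=> hx; rewrite /enorm sqrtr_gt0 lt_def dotv_ge0 andbT.
by apply/eqP => /dotv_eq0 h; rewrite h eqxx in hx.
Qed.

Lemma enorm_sq x : enorm x ^+ 2 = dotv x x.
Proof. by rewrite /enorm sqr_sqrtr // dotv_ge0. Qed.

Lemma enorm_ge0 x : 0 <= enorm x.
Proof. exact: sqrtr_ge0. Qed.

Lemma enormN x y : enorm (x - y) = enorm (y - x).
Proof. by rewrite -opprB /enorm /dotv; congr Num.sqrt; apply: eq_bigr => i _; rewrite !mxE mulrNN. Qed.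

Lemma CS x y : dotv x y ^+ 2 <= dotv x x * dotv y y.
Proof.
have [h0|hpos] := eqVneq (dotv y y) 0.
  have -> := dotv_eq0 h0.
  suff hz : forall z : 'rV[R]_d, dotv z 0 = 0 by rewrite !hz expr0n /= mulr0.
  by move=> z; rewrite /dotv big1 // => i _; rewrite mxE mulr0.
have Qp : 0 < dotv y y by rewrite lt_def hpos dotv_ge0.
have := dotv_ge0 (x - (dotv x y / dotv y y) *: y).
rewrite dotv_expand => h.
have e : dotv x y ^+ 2 = (dotv x y / dotv y y) ^+ 2 * dotv y y * dotv y y.
  by field; rewrite hpos.
have e2 : 2 * (dotv x y / dotv y y) * dotv x y = 2 * ((dotv x y / dotv y y) ^+ 2 * dotv y y).
  by field; rewrite hpos.
rewrite e2 in h.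
rewrite e -mulrA [_ * dotv y y]mulrC mulrA ler_pM2r //.
set a := _ * dotv y y in h *; lra.
Qed.

Lemma num_key {p q k g : R} : 0 < p -> 0 < q -> 1 < g -> k ^+ 2 <= 1 ->
  g^+2 * p^+2 < p^+2 + q^+2 - 2 * k * p * q ->
  g^+2 * q^+2 < p^+2 + q^+2 - 2 * k * p * q -> k < 1 - g^+2 / 2.
Proof.
move=> hp hq hg hk h1 h2; rewrite ltNge; apply/negP => hk2.
have hpq : 0 < p * q by rewrite mulr_gt0.
have h3 : - 2 * k * p * q <= - 2 * p * q + g^+2 * p * q.
  have : (1 - g^+2/2) * (p * q) <= k * (p * q) by rewrite ler_pM2r.
  move=> hh; nra.
have [le|le] := lerP p q.
  have : (q - p) * (q - p - g^+2 * q) <= 0.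
    apply: mulr_ge0_le0; first lra.
    have : q <= g^+2 * q by rewrite ler_peMl // ?ltW //; nra.
    lra.
  nra.
have : (p - q) * (p - q - g^+2 * p) <= 0.
  apply: mulr_ge0_le0; first lra.
  have : p <= g^+2 * p by rewrite ler_peMl // ?ltW //; nra.
  lra.
nra.
Qed.

Lemma geo (u v : 'rV[R]_d) (g : R) : u != 0 -> v != 0 -> 1 < g ->
  g * enorm u < enorm (u - v) -> g * enorm v < enorm (u - v) ->
  2 * asin (g / 2) < acos (dotv u v / (enorm u * enorm v)).
Proof.
move=> hu hv hg h1 h2.
set p := enorm u in h1 *; set q := enorm v in h2 *.
have hp : 0 < p := enorm_gt0 hu.
have hq : 0 < q := enorm_gt0 hv.
set k := dotv u v / (p * q).
have hdot : dotv u v = k * p * q by rewrite /k; field; rewrite ?gt_eqF.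
have hc : enorm (u - v) ^+ 2 = p^+2 + q^+2 - 2 * k * p * q.
  by rewrite enorm_sq -(scale1r v) dotv_expand -!enorm_sq hdot -/p -/q; ring.
have hk : k ^+ 2 <= 1.
  have := CS u v; rewrite hdot -!enorm_sq -/p -/q.
  have -> : (k * p * q) ^+ 2 = k ^+ 2 * (p ^+ 2 * q ^+ 2) by ring.
  by rewrite -[X in _ <= X]mul1r ler_pM2r // mulr_gt0 // exprn_gt0.
have sq : forall a b : R, 0 <= a -> a < b -> a ^+ 2 < b ^+ 2.
  by move=> a b ha hab; rewrite ltr_pXn2r // ?nnegrE //; lra.
have h1' := sq _ _ (mulr_ge0 (ltW (lt_trans ltr01 hg)) (ltW hp)) h1.
have h2' := sq _ _ (mulr_ge0 (ltW (lt_trans ltr01 hg)) (ltW hq)) h2.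
rewrite hc exprMn in h1'. rewrite hc exprMn in h2'.
have key := num_key hp hq hg hk h1' h2'.
have hk1 : -1 <= k <= 1 by apply/andP; split; nra.
have hg2 : g < 2 by nra.
have hg2' : -1 <= g / 2 <= 1 by apply/andP; split; lra.
have [ha hs] := asin_def hg2'.
set a := asin (g / 2) in ha hs *.
have [hac hcos] := acos_def hk1.
have [neg|nneg] := ltP (2 * a) 0.
  by apply: (lt_le_trans neg); case/andP: hac.
have hin1 : 2 * a \in `[0, pi] by rewrite in_itv /=; apply/andP; split => //; case/andP: ha; lra.
have hin2 : acos k \in `[0, pi] by rewrite in_itv /=.
rewrite -(ltr_cos hin1 hin2) hcos.
have -> : 2 * a = a + a by ring.
rewrite cosD -!expr2 cos2sin2 hs; lra.
Qed.

End Geo.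

Section Comb.
Variable T : finType.

Lemma crossing {E : {set T * T}} {S : {set T}} {r z} : r \in S -> z \notin S ->
  connect (fun a b => (a, b) \in E) r z ->
  exists x y, [/\ x \in S, y \notin S & (x, y) \in E].
Proof.
move=> hr hz /connectP [p hp hzl]; subst z.
elim: p r hr hp hz => [|y p IH] r hr /= hp hz; first by rewrite hr in hz.
case/andP: hp => hry hp.
case: (boolP (y \in S)) => hy; first exact: IH hy hp hz.
by exists r, y.
Qed.

Lemma conn_lb (U : {set T}) (E : {set T * T}) :
  (forall x y, (x, y) \in E -> [&& x \in U, y \in U & x != y]) ->
  (forall x y, (x, y) \in E -> (y, x) \in E) ->
  U != finset.set0 ->
  {in U &, forall x y, connect (fun a b => (a, b) \in E) x y} ->
  ((#|U| - 1).*2 <= #|E|)%N.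
Proof.
move=> hE hsym hU hc; have [r hr] := finset.set0Pn _ hU.
suff: forall k, (k < #|U|)%N -> exists S : {set T}, [/\ S \subset U, r \in S, #|S| = k.+1
   & (k.*2 <= #|[set p in E | (p.1 \in S) && (p.2 \in S)]|)%N].
  have hpos : (0 < #|U|)%N by rewrite card_gt0.
  move=> /(_ (#|U| - 1)%N) [|S [_ _ _ h]]; first by rewrite subn1 prednK.
  apply: leq_trans h (subset_leq_card _).
  by apply/fintype.subsetP => p; rewrite inE => /andP[].
elim => [|k IH] hk.
  by exists [set r]; split; rewrite ?finset.sub1set ?finset.set11 ?finset.cards1.
have [S [hSU hrS hSk hSE]] := IH (ltnW hk).
have /fintype.subsetPn [z hzU hzS] : ~~ (U \subset S).
  by apply/negP => /subset_leq_card; rewrite hSk; lia.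
have [x [y [hx hy hxy]]] := crossing hrS hzS (hc r z hr hzU).
have /and3P [hxU hyU hxny] := hE _ _ hxy.
exists (y |: S); split.
- by rewrite finset.subUset finset.sub1set hSU andbT.
- by rewrite in_setU1 hrS orbT.
- by rewrite cardsU1 hy hSk.
set F := [set p in E | (p.1 \in S) && (p.2 \in S)] in hSE *; set F' := [set p in E | _].
have sub : (x, y) |: ((y, x) |: F) \subset F'.
  apply/fintype.subsetP => p; rewrite !in_setU1 => /or3P [/eqP->|/eqP->|].
  + by rewrite !inE /= hxy eqxx /= hx !orbT.
  + by rewrite !inE /= (hsym _ _ hxy) eqxx /= hx !orbT.
  + by rewrite !inE => /and3P [-> -> ->]; rewrite !orbT.
apply: leq_trans (subset_leq_card sub).
rewrite !cardsU1 !in_setU1 !inE /= (negbTE hy) !andbF xpair_eqE.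
by rewrite (negbTE hxny) /= doubleS !add1n !ltnS.
Qed.

Lemma card2D (X : finType) (A : {set X}) a c : a \in A -> c \in A :\ a ->
  #|A| = (2 + #|A :\ a :\ c|)%N.
Proof. by move=> ha hc; rewrite (cardsD1 a A) ha (cardsD1 c (A :\ a)) hc. Qed.

Lemma swap_tree {U : {set T}} {E : {set T * T}} {a1 a2 b} :
  is_tree U E -> (a1, b) \in E -> (a2, b) \in E -> a1 != a2 ->
  let E'' := E :\ (a2, b) :\ (b, a2) in
  [/\ is_tree U ((a1, a2) |: ((a2, a1) |: E'')),
      (a1, a2) \notin (a2, a1) |: E'' & (a2, a1) \notin E''].
Proof.
case=> hU hE hsym hconn hcard h1 h2 h12 E''.
have /and3P [a1U bU a1b] := hE _ _ h1.
have /and3P [a2U _ a2b] := hE _ _ h2.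
have inE'' : forall x y, ((x, y) \in E'') = [&& ~~ ((x == b) && (y == a2)),
    ~~ ((x == a2) && (y == b)) & (x, y) \in E].
  by move=> x y; rewrite /E'' !in_setD1 !xpair_eqE.
set E' := _ |: _.
have hE' : forall x y, (x, y) \in E' -> [&& x \in U, y \in U & x != y].
  move=> x y; rewrite !in_setU1 inE'' !xpair_eqE.
  case/or3P => [/andP[/eqP-> /eqP->]|/andP[/eqP-> /eqP->]|/and3P[_ _ /hE]] //.
    by rewrite a1U a2U h12.
  by rewrite a1U a2U eq_sym h12.
have hsym' : forall x y, (x, y) \in E' -> (y, x) \in E'.
  move=> x y; rewrite !in_setU1 !inE'' !xpair_eqE.
  case/or3P => [/andP[/eqP-> /eqP->]|/andP[/eqP-> /eqP->]|/and3P[n1 n2 /hsym n3]].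
  + by rewrite !eqxx orbT.
  + by rewrite !eqxx.
  by rewrite n3 andbT [(y == b) && _]andbC [(y == a2) && (x == b)]andbC n1 n2 !orbT.
have hconn' : {in U &, forall x y, connect (fun a b => (a, b) \in E') x y}.
  move=> x y hx hy; apply: (connect_sub _ (hconn x y hx hy)) => u v huv.
  have e2 : (a1, a2) \in E' by rewrite !in_setU1 eqxx.
  have e3 : (a2, a1) \in E' by rewrite !in_setU1 eqxx orbT.
  have e4 : (a1, b) \in E' by rewrite !in_setU1 inE'' h1 !xpair_eqE (negbTE a1b) (negbTE h12) /= !orbT.
  have e5 : (b, a1) \in E'.
    by rewrite !in_setU1 inE'' (hsym _ _ h1) !xpair_eqE (negbTE h12) [b == a2]eq_sym (negbTE a2b) /= !andbF /= ?orbT.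
  have [[-> ->]|n1] := eqVneq (u, v) (a2, b).
    by apply: (connect_trans (connect1 e3)); apply: connect1.
  have [[-> ->]|n2] := eqVneq (u, v) (b, a2).
    by apply: (connect_trans (connect1 e5)); apply: connect1.
  by apply: connect1; rewrite !in_setU1 /E'' !in_setD1 n1 n2 huv !orbT.
have lb := conn_lb U E' hE' hsym' hU hconn'.
have cE : ((#|U| - 1).*2 = 2 + #|E''|)%N.
  rewrite -hcard; apply: card2D => //; rewrite in_setD1 (hsym _ _ h2) andbT; apply/eqP => -[e _]; by rewrite e eqxx in a2b.
have cE' : #|E'| = (((a1, a2) \notin (a2, a1) |: E'') + (((a2, a1) \notin E'') + #|E''|))%N.
  by rewrite /E' !cardsU1.
rewrite cE cE' in lb.
move: lb cE'; case: ((a1, a2) \notin _); case: ((a2, a1) \notin _) => /= lb cE'; try lia.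
split => //; split => //.
by rewrite cE' cE.
Qed.

End Comb.

Section Main.
Variables (R : realType) (d : nat) (T : finType).
Variables (pos : T -> 'rV[R]_d) (Term : {set T}) (gamma : R) (hgamma : 1 < gamma)
  (U : {set T}) (E : {set T * T}) (hOPT : stable_with pos Term gamma U E).

Lemma eweightC u v : eweight pos u v = eweight pos v u.
Proof. exact: enormN. Qed.

Lemma key a1 a2 b : a1 != a2 -> (a1, b) \in E -> (a2, b) \in E ->
  gamma * eweight pos a2 b < eweight pos a1 a2.
Proof.
move=> h12 h1 h2.
case: hOPT => [[[htree hTU] hmin] hstab].
have [_ hE hsym _ _] := htree.
have /and3P [_ _ a1b] := hE _ _ h1.
have /and3P [_ _ a2b] := hE _ _ h2.
rewrite ltNge; apply/negP => hle.
have [ht' hn1 hn2] := swap_tree _ htree h1 h2 h12.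
set E'' := E :\ (a2, b) :\ (b, a2) in ht' hn1 hn2.
set E' := (a1, a2) |: ((a2, a1) |: E'') in ht'.
pose w' := fun u v => if (u, v) \in E then gamma * eweight pos u v else eweight pos u v.
have wsym : forall u v, w' u v = w' v u.
  move=> u v; rewrite /w' eweightC.
  case: (boolP ((u, v) \in E)) => huv; first by rewrite (hsym _ _ huv).
  case: (boolP ((v, u) \in E)) => hvu //.
  by rewrite (hsym _ _ hvu) in huv.
have hg0 : 0 <= gamma by apply: ltW; apply: lt_trans hgamma.
have wbnd : forall u v, eweight pos u v <= w' u v <= gamma * eweight pos u v.
  move=> u v; rewrite /w'; have e0 : 0 <= eweight pos u v by exact: enorm_ge0.
  have e1 : eweight pos u v <= gamma * eweight pos u v by rewrite ler_peMl // ltW.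
  by case: ((u, v) \in E); rewrite e1 lexx.
have inE'' : forall x y, ((x, y) \in E'') = [&& ~~ ((x == b) && (y == a2)),
    ~~ ((x == a2) && (y == b)) & (x, y) \in E].
  by move=> x y; rewrite /E'' !in_setD1 !xpair_eqE.
have n12 : (a1, a2) \notin E.
  apply: contra hn1 => h; rewrite in_setU1 inE'' h xpair_eqE.
  by rewrite (negbTE a1b) (negbTE h12) /=.
have n21 : (a2, a1) \notin E.
  by apply: contra n12 => /hsym.
have eE : E = (a2, b) |: ((b, a2) |: E'').
  by rewrite /E'' !finset.setD1K // in_setD1 (hsym _ _ h2) andbT; apply/eqP => -[e _]; rewrite e eqxx in a2b.
have nb1 : (b, a2) \notin E'' by rewrite /E'' finset.setD11.
have nb2 : (a2, b) \notin (b, a2) |: E''.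
  rewrite in_setU1 negb_or /E'' in_setD1 in_setD1 eqxx /= andbF andbT.
  by apply/eqP => -[e _]; rewrite e eqxx in a2b.
have wle : tree_weight w' E' <= tree_weight w' E.
  rewrite /tree_weight ler_pM2r ?invr_gt0 ?ltr0n //.
  rewrite /E' {1}eE !big_setU1 //= /w' (negbTE n12) (negbTE n21) h2 (hsym _ _ h2).
  rewrite [eweight pos b a2]eweightC [eweight pos a2 a1]eweightC.
  rewrite !addrA lerD2r; rewrite leNgt in hle; lra.
have [M hM hMmin] := arg_minP (fun X : {set T} * {set (T * T)} => tree_weight w' X.2)
   (P := fun X => `[< steiner_tree Term X.1 X.2 >]) (i0 := (U, E)) (asboolT (conj htree hTU)).
have hMst : min_steiner Term w' M.1 M.2.
  split; first exact/asboolP.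
  by move=> U3 E3 hst; apply: (hMmin (U3, E3)); apply/asboolP.
have [eU eE2] := hstab w' wsym wbnd _ _ hMst.
have hE'st : min_steiner Term w' U E'.
  split; first by split.
  move=> U2 E2 hst; apply: (le_trans wle).
  have := hMmin (U2, E2) (asboolT hst); rewrite /= eE2 //.
have [_ eq] := hstab w' wsym wbnd _ _ hE'st.
have : (a2, b) \in E' by rewrite eq.
rewrite /E' !in_setU1 in_setD1 in_setD1 eqxx /= andbF !orbF !xpair_eqE.
by rewrite [b == a2]eq_sym [b == a1]eq_sym (negbTE a1b) (negbTE a2b) !andbF.
Qed.

End Main.

Theorem mainTheorem10 (R : realType) (d : nat) (T : finType)
    (pos : T -> 'rV[R]_d) (pos_inj : injective pos) (Term : {set T})
    (gamma : R) (hgamma : 1 < gamma)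
    (U : {set T}) (E : {set T * T}) (hOPT : stable_with pos Term gamma U E)
    (a1 a2 b : T) (ha1 : a1 \in Term) (ha2 : a2 \in Term) (ha12 : a1 != a2)
    (hb : b \notin Term) (he1 : (a1, b) \in E) (he2 : (a2, b) \in E) :
  2 * asin (gamma / 2) < angle (pos a1) (pos b) (pos a2).
Proof.
have k1 := @key R d T pos Term gamma hgamma U E hOPT a1 a2 b ha12 he1 he2.
have ha21 : a2 != a1 by rewrite eq_sym.
have k2 := @key R d T pos Term gamma hgamma U E hOPT a2 a1 b ha21 he2 he1.
have a1b : a1 != b by apply: contraNneq hb => <-.
have a2b : a2 != b by apply: contraNneq hb => <-.
rewrite /eweight in k1 k2.
rewrite /angle; apply: geo => //.
- by rewrite subr_eq0; apply: contra a1b => /eqP /pos_inj ->.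
- by rewrite subr_eq0; apply: contra a2b => /eqP /pos_inj ->.
- by rewrite opprB addrA subrK [enorm (pos a1 - pos a2)]enormN.
- by rewrite opprB addrA subrK.
Qed.
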